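(* Let $(X,\tau)$ be a Hausdorff extended locally convex space and let $x\in X$ with $x\neq 0_X$. Then there exists a $\tau$-continuous linear functional $f$ on $X$ with $f(x)\neq0$.
   Context: An extended seminorm on a vector space $X$ over $\mathbb{R}$ or $\mathbb{C}$ is a map $\rho:X\to[0,\infty]$ with $\rho(\alpha x)=|\alpha|\rho(x)$ and $\rho(x+y)\le\rho(x)+\rho(y)$. An extended locally convex space $(X,\tau)$ is a vector space with the topology induced by a family $\{\rho_i\}$ of extended seminorms (neighborhood base at $x_0$: $\{x:\max_{i\in J}\rho_i(x-x_0)<\varepsilon\}$, $J$ finite, $\varepsilon>0$). *)

(* Defs.v *)
From Stdlib Require List.
From HB Require Import structures.
From mathcomp Require Import all_boot all_order all_algebra.
From mathcomp Require Import constructive_ereal.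
From mathcomp Require Import complex.
Set Implicit Arguments. Unset Strict Implicit. Unset Printing Implicit Defensive.
Import Order.TTheory GRing.Theory Num.Theory.
Local Open Scope ring_scope.
Local Open Scope ereal_scope.

(* Scalars K : a numFieldType (instantiated with a real field R or with
   the complex numbers R[i]); X : a K-vector space. *)

Definition ext_seminorm (K : numFieldType) (X : lmodType K) (rho : X -> \bar K) :=
  [/\ forall x, 0 <= rho x,
      forall (a : K) (x : X), rho (a *: x) = (`|a|)%:E * rho x &
      forall x y, rho (x + y)%R <= rho x + rho y].

Definition ebasic_nbhd (K : numFieldType) (X : lmodType K) (I : Type)
    (rho : I -> X -> \bar K) (J : seq I) (eps : K) (x0 : X) (y : X) : Prop :=
  forall i, List.In i J -> rho i (y - x0)%R < eps%:E.

Definition elc_open (K : numFieldType) (X : lmodType K) (I : Type)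
    (rho : I -> X -> \bar K) (U : X -> Prop) : Prop :=
  forall x0, U x0 -> exists (J : seq I) (eps : K), (0 < eps)%R /\
    forall y, ebasic_nbhd rho J eps x0 y -> U y.

Definition elc_hausdorff (K : numFieldType) (X : lmodType K) (I : Type)
    (rho : I -> X -> \bar K) : Prop :=
  forall x y : X, x <> y -> exists U V : X -> Prop,
    [/\ elc_open rho U, elc_open rho V, U x, V y &
        forall z, ~ (U z /\ V z)].

Definition scalar_open (K : numFieldType) (W : K -> Prop) : Prop :=
  forall z0, W z0 -> exists eps : K, (0 < eps)%R /\
    forall z, (`|z - z0| < eps)%R -> W z.

Definition linear_functional (K : numFieldType) (X : lmodType K) (f : X -> K) :=
  forall (a : K) (x y : X), (f (a *: x + y) = a * f x + f y)%R.

Definition elc_continuous (K : numFieldType) (X : lmodType K) (I : Type)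
    (rho : I -> X -> \bar K) (f : X -> K) : Prop :=
  forall W, scalar_open W -> elc_open rho (fun x => W (f x)).

Definition cor3p10_over (K : numFieldType) : Prop :=
  forall (X : lmodType K) (I : Type) (rho : I -> X -> \bar K),
    (forall i, ext_seminorm (rho i)) ->
    elc_hausdorff rho ->
    forall x : X, x <> 0%R ->
    exists f : X -> K, [/\ linear_functional f, elc_continuous rho f & f x <> 0%R].

(* Main.v *)
Require Import Defs.
From HB Require Import structures.
From mathcomp Require Import all_boot all_order all_algebra.
From mathcomp Require Import constructive_ereal reals.
From mathcomp Require Import complex.
From mathcomp Require Import classical_sets boolp.
From mathcomp Require Import ring lra.
Set Implicit Arguments. Unset Strict Implicit. Unset Printing Implicit Defensive.
Import Order.TTheory GRing.Theory Num.Theory.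
Local Open Scope ring_scope.
Local Open Scope classical_set_scope.

Section HBcore.
Variables (R : realType) (V : zmodType) (sc : R -> V -> V).
Hypothesis scA : forall a b x, sc a (sc b x) = sc (a * b) x.
Hypothesis sc1 : forall x, sc 1 x = x.
Hypothesis scDr : forall a x y, sc a (x + y) = sc a x + sc a y.
Hypothesis scDl : forall a b x, sc (a + b) x = sc a x + sc b x.
Variable p : V -> \bar R.
Hypothesis p_ge0 : forall x, (0 <= p x)%E.
Hypothesis pZ : forall a x, p (sc a x) = (`|a|%:E * p x)%E.
Hypothesis pD : forall x y, (p (x + y) <= p x + p y)%E.
Variables (x0 : V) (c0 : R).
Hypothesis hc0 : (`|c0|%:E <= p x0)%E.

Lemma sc0x x : sc 0 x = 0.
Proof.
have h := scDl 0 0 x; rewrite addr0 in h.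
by apply: (addrI (sc 0 x)); rewrite -h addr0.
Qed.

Lemma scx0 a : sc a 0 = 0.
Proof.
have h := scDr a 0 0; rewrite addr0 in h.
by apply: (addrI (sc a 0)); rewrite -h addr0.
Qed.

Lemma scN1 x : sc (-1) x = - x.
Proof.
have h := scDl 1 (-1) x; rewrite subrr sc0x sc1 in h.
by apply: (addrI x); rewrite -h subrr.
Qed.

Lemma p0 : p 0 = 0%E.
Proof. by rewrite -(scx0 0) pZ normr0 mul0e. Qed.

Lemma pN x : p (- x) = p x.
Proof. by rewrite -scN1 pZ normrN normr1 mul1e. Qed.

Definition lin_closed (G : set (V * R)) :=
  forall a u w, G u -> G w -> G (sc a u.1 + w.1, a * u.2 + w.2).
Definition functional (G : set (V * R)) :=
  forall v a b, G (v, a) -> G (v, b) -> a = b.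
Definition dominated (G : set (V * R)) :=
  forall v a, G (v, a) -> (`|a|%:E <= p v)%E.
Definition PG (G : set (V * R)) :=
  [/\ lin_closed G, functional G, dominated G & G (x0, c0)].

Lemma PG00 G : PG G -> G (0, 0).
Proof.
case=> cl _ _ G0.
have := cl (-1) _ _ G0 G0; rewrite /= scN1 addNr mulN1r addNr; exact.
Qed.

Lemma PG_scale G a v b : PG G -> G (v, b) -> G (sc a v, a * b).
Proof.
move=> PGG Gv; have := PGG; case=> cl _ _ _; have := cl a _ _ Gv (PG00 PGG).
by rewrite /= addr0 addr0.
Qed.

Definition G0 : set (V * R) := [set z | exists t, z = (sc t x0, t * c0)].

Lemma PG_G0 : PG G0.
Proof.
split.
- move=> a _ _ [t ->] [s ->] /=; exists (a * t + s).
  by rewrite scA scDl; congr (_, _); ring.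
- move=> v a b [t [-> ->]] [s [E ->]].
  have [->//|ts] := eqVneq t s.
  have h : sc (t - s) x0 = 0.
    by apply: (addIr (sc s x0)); rewrite -scDl subrK add0r.
  have x00 : x0 = 0.
    have ts0 : t - s != 0 by rewrite subr_eq0.
    by rewrite -[x0]sc1 -(mulVf ts0) -scA h scx0.
  move: hc0; rewrite x00 p0 lee_fin normr_le0 => /eqP ->.
  by rewrite !mulr0.
- move=> v a [t [-> ->]]; rewrite pZ normrM EFinM.
  by apply: lee_wpmul2l => //; rewrite lee_fin.
- by exists 1; rewrite sc1 mul1r.
Qed.

Lemma choose_c G y : PG G ->
  exists c, forall m a, G (m, a) -> (`|a + c|%:E <= p (m + y))%E.
Proof.
move=> PGG; have := PGG; case=> cl fn dm Gx0.
have key m a m1 a1 q q1 : G (m, a) -> G (m1, a1) -> p (m + y) = q%:E ->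
    p (m1 + y) = q1%:E -> a - a1 <= q + q1.
  move=> Gm Gm1 Eq Eq1.
  have := cl (-1) _ _ Gm1 Gm; rewrite /= scN1 mulN1r => G2.
  have h := dm _ _ G2.
  have : (`|- a1 + a|%:E <= (q + q1)%:E)%E.
    apply: (le_trans h); rewrite EFinD -Eq -Eq1 -(pN (m1 + y)).
    have -> : - m1 + m = (m + y) + - (m1 + y).
      by rewrite opprD addrACA subrr addr0 addrC.
    exact: pD.
  rewrite lee_fin addrC; apply: le_trans; exact: ler_norm.
pose S : set R := [set r | exists m a q, [/\ G (m, a), p (m + y) = q%:E & r = - a - q]].
have [[r0 [m0 [a0 [q0 [Gm0 Eq0 _]]]]]|S0] := pselect (S !=set0); last first.
  exists 0 => m a Gm; case E: (p (m + y)) => [q| |].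
  - by exfalso; apply: S0; exists (- a - q); exists m, a, q.
  - exact: leey.
  - by have := p_ge0 (m + y); rewrite E.
have hs : has_sup S.
  split; first by exists (- a0 - q0), m0, a0, q0.
  exists (q0 - a0) => _ [m [a [q [Gm Eq ->]]]].
  have := key _ _ _ _ _ _ Gm0 Gm Eq0 Eq; lra.
exists (sup S) => m a Gm; case E: (p (m + y)) => [q| |].
- rewrite lee_fin ler_norml; apply/andP; split.
  + have : - a - q <= sup S by apply: sup_upper_bound => //; exists m, a, q.
    lra.
  + have : sup S <= q - a.
      apply: ge_sup; first by exists (- a0 - q0), m0, a0, q0.
      move=> _ [m1 [a1 [q1 [Gm1 Eq1 ->]]]].
      have := key _ _ _ _ _ _ Gm Gm1 E Eq1; lra.
    lra.
- exact: leey.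
- by have := p_ge0 (m + y); rewrite E.
Qed.


Lemma extend G y : PG G -> ~ (exists a, G (y, a)) ->
  exists G', PG G' /\ G `<` G'.
Proof.
move=> PGG ny; have := PGG; case=> cl fn dm Gx0.
have [c hc] := choose_c y PGG.
pose G' : set (V * R) :=
  [set z | exists m a t, G (m, a) /\ z = (m + sc t y, a + t * c)].
have sub : G `<=` G'.
  by move=> [m a] Gm; exists m, a, 0; rewrite sc0x addr0 mul0r addr0.
exists G'; split; last first.
  split => // /(_ (y, c)) h; apply: ny; exists c; apply: h.
  exists 0, 0, 1; split; first exact: PG00 PGG.
  by rewrite sc1 add0r mul1r add0r.
split.
- move=> b _ _ [m1 [a1 [t1 [G1 ->]]]] [m2 [a2 [t2 [G2 ->]]]] /=.
  exists (sc b m1 + m2), (b * a1 + a2), (b * t1 + t2); split; first exact: (cl b (m1, a1) (m2, a2) G1 G2).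
  rewrite scDr scA scDl addrACA; congr (_, _); ring.
- move=> v e f [m1 [a1 [t1 [G1 [E1 ->]]]]] [m2 [a2 [t2 [G2 [E2 ->]]]]].
  have [tt|ts] := eqVneq t1 t2.
    subst t2; have mm : m1 = m2 by apply: (addIr (sc t1 y)); rewrite -E1 -E2.
    subst m2; by rewrite (fn _ _ _ G1 G2).
  exfalso; apply: ny.
  have h : sc (t1 - t2) y = m2 - m1.
    apply: (addIr (sc t2 y)); rewrite -scDl subrK.
    apply: (addrI m1); rewrite -E1 E2 addrA addrCA subrr addr0 addrC. by [].
  have G3 : G (m2 - m1, a2 - a1).
    by have := cl (-1) _ _ G1 G2; rewrite /= scN1 mulN1r addrC [_ + a2]addrC.
  have ts0 : t1 - t2 != 0 by rewrite subr_eq0.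
  exists ((t1 - t2)^-1 * (a2 - a1)).
  have := PG_scale ((t1 - t2)^-1) PGG G3.
  by rewrite -h scA mulVf // sc1.
- move=> v e [m [a [t [Gm [-> ->]]]]].
  have [->|t0] := eqVneq t 0.
    by rewrite sc0x addr0 mul0r addr0; exact: dm.
  have G3 := PG_scale (t^-1) PGG Gm.
  have h := hc _ _ G3.
  have -> : m + sc t y = sc t (sc t^-1 m + y) by rewrite scDr scA mulfV // sc1.
  rewrite pZ.
  have -> : a + t * c = t * (t^-1 * a + c) by rewrite mulrDr mulrA mulfV // mul1r.
  by rewrite normrM EFinM; apply: lee_wpmul2l => //; rewrite lee_fin.
- exact: sub Gx0.
Qed.

Lemma hb_core : exists g : V -> R,
  [/\ forall a x y, g (sc a x + y) = a * g x + g y,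
      forall v, (`|g v|%:E <= p v)%E & g x0 = c0].
Proof.
pose P' (G : set (V * R)) := PG G \/ G = set0.
have [A [PA maxA]] : exists A, P' A /\ forall B, A `<` B -> ~ P' B.
  apply: Zorn_bigcup => F FP Ftot.
  have [[[v a] [G FG Gva]]|nE] := pselect ((\bigcup_(X in F) X) !=set0); last first.
    right; apply/seteqP; split=> // z Fz; exfalso; apply: nE; by exists z.
  have PGG : PG G by case: (FP _ FG) => // G0e; move: Gva; rewrite G0e.
  have common u w : (\bigcup_(X in F) X) u -> (\bigcup_(X in F) X) w ->
      exists H, [/\ F H, PG H, H u & H w].
    move=> [H1 FH1 H1u] [H2 FH2 H2w].
    have PH1 : PG H1 by case: (FP _ FH1) => // H0; move: H1u; rewrite H0.
    have PH2 : PG H2 by case: (FP _ FH2) => // H0; move: H2w; rewrite H0.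
    have [s12|s21] := Ftot _ _ FH1 FH2.
      by exists H2; split => //; exact: s12.
    by exists H1; split => //; exact: s21.
  left; split.
  - move=> b u w Fu Fw; have [H [FH PH Hu Hw]] := common _ _ Fu Fw.
    by exists H => //; case: PH => cl _ _ _; exact: cl.
  - move=> x a1 b1 Fu Fw; have [H [FH PH Hu Hw]] := common _ _ Fu Fw.
    by case: PH => _ fn _ _; exact: fn Hu Hw.
  - move=> x a1 [H FH Hx]; have [H' [FH' PH Hu _]] := common _ _ (ex_intro2 _ _ H FH Hx) (ex_intro2 _ _ H FH Hx).
    by case: PH => _ _ dm _; exact: dm Hu.
  - by exists G => //; case: PGG.
have PGA : PG A.
  case: PA => // A0; exfalso; apply: (maxA G0); last by left; exact: PG_G0.
  rewrite A0; split; first by [].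
  move=> /(_ (x0, c0)) h; have : G0 (x0, c0) by case: PG_G0.
  by move/h.
have tot v : exists a, A (v, a).
  apply: contrapT => nv; have [G' [PG' AG']] := extend PGA nv.
  exact: (maxA G' AG' (or_introl PG')).
have [g hg] := choice tot.
have := PGA; case=> cl fn dm Ax0.
exists g; split.
- move=> a x y; apply: (fn _ _ _ (hg _)).
  exact: (cl a (x, g x) (y, g y) (hg x) (hg y)).
- by move=> v; exact: dm (hg v).
- exact: fn (hg x0) Ax0.
Qed.

End HBcore.
Local Close Scope classical_set_scope.
Lemma haus_nz (K : numFieldType) (X : lmodType K) (I : Type) (rho : I -> X -> \bar K) (x : X) :
  elc_hausdorff rho -> x <> 0 -> exists i, rho i x <> 0%E.
Proof.
move=> H x0; apply: contrapT => nz.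
have [U [V [_ oV Ux V0 dUV]]] := H x 0 x0.
have [J [eps [e0 nb]]] := oV 0 V0.
apply: (dUV x); split => //; apply: nb => i _.
rewrite subr0; have -> : rho i x = 0%E by apply: contrapT => h; apply: nz; exists i.
by rewrite lte_fin.
Qed.

Lemma cont_of_bound (K : numFieldType) (X : lmodType K) (I : Type) (rho : I -> X -> \bar K)
  (f : X -> K) (i : I) (C : K) : 0 < C -> (forall u v, f (u - v) = f u - f v) ->
  (forall v eps, 0 < eps -> (rho i v < eps%:E)%E -> `|f v| < C * eps) ->
  elc_continuous rho f.
Proof.
move=> C0 fB hb W oW x1 Wx1.
have [e [e0 he]] := oW _ Wx1.
exists [:: i], (e / C); split; first by rewrite divr_gt0.
move=> y nb; apply: he; rewrite -fB.
have := hb (y - x1) (e / C) (divr_gt0 e0 C0) (nb i (or_introl erefl)).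
by rewrite mulrC divfK // gt_eqF.
Qed.
Lemma real_case (R : realType) : cor3p10_over R.
Proof.
move=> X I rho hrho H x xn0.
have [i ni] := haus_nz H xn0.
have [p0 pZ pD] := hrho i.
have [c0 [c0n0 hc0]] : exists c0 : R, c0 != 0 /\ (`|c0|%:E <= rho i x)%E.
  case E: (rho i x) => [r| |].
  - exists r; have r0 : 0 <= r by rewrite -lee_fin -E.
    split; first by apply/eqP => r0'; apply: ni; rewrite E r0'.
    by rewrite ger0_norm.
  - by exists 1; rewrite oner_eq0; split => //; exact: leey.
  - by have := p0 x; rewrite E.
have [g [gL gb gx]] := @hb_core R X (fun a v => a *: v) (@scalerA _ _) (@scale1r _ _)
  (@scalerDr _ _) (fun a b v => scalerDl v a b) (rho i) p0 pZ pD x c0 hc0.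
have g0 : g 0 = 0.
  by have := gL 1 0 0; rewrite scaler0 addr0 mul1r => /eqP; rewrite -subr_eq subrr => /eqP <-.
exists g; split.
- by move=> a u v; exact: gL.
- apply: (@cont_of_bound _ _ _ _ _ i 1) => //.
    move=> u v; have := gL 1 v (u - v).
    by rewrite scale1r mul1r [v + _]addrC subrK => ->; rewrite [g v + _]addrC addrK.
  move=> v eps _ h; rewrite mul1r -lte_fin; exact: le_lt_trans (gb v) h.
- by rewrite gx; apply/eqP.
Qed.
Section Cx.
Local Open Scope complex_scope.

Definition re_e (R : realType) (z : \bar R[i]) : \bar R :=
  match z with EFin w => (complex.Re w)%:E | +oo%E => +oo%E | -oo%E => -oo%E end.

Lemma ge0_cases (R : realType) (z : \bar R[i]) : (0 <= z)%E ->
  z = +oo%E \/ exists w, z = w%:E /\ 0 <= w.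
Proof.
case: z => [w| |] h; [right; exists w; split => //; by rewrite -lee_fin | by left |].
by move: h.
Qed.

Lemma normC_real (R : realType) (r : R) : `|r%:C| = `|r|%:C.
Proof. by rewrite normc_def /= expr0n addr0 sqrtr_sqr. Qed.

Lemma normC_i (R : realType) : `|'i : R[i]| = 1.
Proof. by rewrite normc_def /= expr0n add0r expr1n sqrtr1. Qed.
Notation Rc := complex.Re.

Lemma pe_ge0 (R : realType) (z : \bar R[i]) : (0 <= z)%E -> (0 <= re_e z)%E.
Proof.
move/ge0_cases => [->|[w [-> w0]]] /=; first exact: leey.
by rewrite lee_fin; move: w0; rewrite lecE => /andP[_].
Qed.

Lemma pe_scale (R : realType) (s : R) (z : \bar R[i]) : 0 <= s -> (0 <= z)%E ->
  re_e ((s%:C)%:E * z)%E = (s%:E * re_e z)%E.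
Proof.
move=> s0 /ge0_cases [->|[w [-> w0]]] /=.
- have [->|sn0] := eqVneq s 0; first by rewrite !mul0e.
  have sp : 0 < s by rewrite lt_def sn0 s0.
  have e1 : (s%:C == 0) = false by apply/negbTE; rewrite eq_complex /= negb_and sn0.
  by rewrite /mule /= !eqe e1 (negbTE sn0) !lte_fin ltcR sp.
- by case: w w0 => a b _ /=; rewrite mul0r subr0.
Qed.

Lemma pe_sub (R : realType) (z w : \bar R[i]) : (0 <= z)%E -> (z <= w)%E ->
  (re_e z <= re_e w)%E.
Proof.
move=> /ge0_cases [->|[a [-> a0]]].
  by case: w => [b| |] //=; rewrite leye_eq.
case: w => [b| |] //= h; last exact: leey.
by move: h; rewrite lee_fin lecE lee_fin => /andP[_].
Qed.

Lemma pe_add (R : realType) (z w : \bar R[i]) : (0 <= z)%E -> (0 <= w)%E ->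
  re_e (z + w)%E = (re_e z + re_e w)%E.
Proof.
move=> /ge0_cases [->|[a [-> a0]]] /ge0_cases [->|[b [-> b0]]] //=.
by case: a {a0} => ? ?; case: b {b0} => ? ?.
Qed.

Lemma pe_lt (R : realType) (z : \bar R[i]) (e : R[i]) : (0 <= z)%E -> (z < e%:E)%E ->
  (re_e z < (Rc e)%:E)%E.
Proof.
move=> /ge0_cases [->|[a [-> a0]]] //=.
by rewrite !lte_fin ltcE => /andP[_].
Qed.

Lemma decompC (R : realType) (X : lmodType R[i]) (b : R[i]) (u : X) :
  b *: u = (Rc b)%:C *: u + (complex.Im b)%:C *: ('i *: u).
Proof.
rewrite scalerA -scalerDl; congr (_ *: u).
by case: b => b1 b2; apply/eqP; rewrite eq_complex /= !mul0r !mulr0 !mulr1 !subr0 !addr0 !add0r !eqxx.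
Qed.

Lemma cplx_case (R : realType) : cor3p10_over R[i].
Proof.
move=> X I rho hrho H x xn0.
have [i ni] := haus_nz H xn0.
have [p0 pZ pD] := hrho i.
pose sc (r : R) (v : X) := r%:C *: v.
pose p (v : X) := re_e (rho i v).
have scA : forall a b v, sc a (sc b v) = sc (a * b) v.
  by move=> a b v; rewrite /sc scalerA rmorphM.
have sc1 : forall v, sc 1 v = v by move=> v; rewrite /sc rmorph1 scale1r.
have scDr : forall a u v, sc a (u + v) = sc a u + sc a v by move=> *; rewrite /sc scalerDr.
have scDl : forall a b v, sc (a + b) v = sc a v + sc b v by move=> *; rewrite /sc rmorphD scalerDl.
have pp0 : forall v, (0 <= p v)%E by move=> v; apply: pe_ge0.
have ppZ : forall a v, p (sc a v) = (`|a|%:E * p v)%E.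
  by move=> a v; rewrite /p /sc pZ normC_real pe_scale.
have ppD : forall u v : X, (p (u + v)%R <= p u + p v)%E.
  by move=> u v; rewrite /p -pe_add //; apply: pe_sub => //; exact: pD.
have [c0 [c0n0 hc0]] : exists c0 : R, c0 != 0 /\ (`|c0|%:E <= p x)%E.
  rewrite /p; have := p0 x; move/ge0_cases => [->|[w [E w0]]].
    by exists 1; rewrite oner_eq0; split => //; exact: leey.
  rewrite E /=; exists (Rc w); move: w0; rewrite lecE => /andP[/eqP Iw Rw].
  split; last by rewrite ger0_norm.
  apply/eqP => R0; apply: ni; rewrite E; congr (_%:E).
  by move: Iw R0; case: w {E Rw} => a b /= -> ->; apply/eqP; rewrite eq_complex /= !eqxx.
have [g [gL gb gx]] := @hb_core R X sc scA sc1 scDr scDl p pp0 ppZ ppD x c0 hc0.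
have gB u v : g (u - v) = g u - g v.
  have := gL 1 v (u - v); rewrite sc1 mul1r [v + _]addrC subrK => ->.
  by rewrite [g v + _]addrC addrK.
have g0 : g 0 = 0 by rewrite -(subrr 0) gB subrr.
have gD u v : g (u + v) = g u + g v by have := gL 1 u v; rewrite sc1 mul1r.
have gC b u : g (b *: u) = Rc b * g u + complex.Im b * g ('i *: u).
  by rewrite decompC gD -[_ *: u]addr0 -[_ *: ('i *: u)]addr0 !gL g0 !addr0.
pose f (v : X) : R[i] := (g v)%:C - 'i * (g ('i *: v))%:C.
exists f; split.
- move=> a u v; rewrite /f scalerDr scalerA !gD (gC a u) (gC ('i * a) u).
  move: (g u) (g ('i *: u)) (g v) (g ('i *: v)) => A B C D.
  case: a => a1 a2; apply/eqP; rewrite eq_complex /=.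
  by apply/andP; split; apply/eqP; ring.
- apply: (@cont_of_bound _ _ _ _ _ i 2); first by rewrite ltr0n.
    by move=> u v; rewrite /f scalerBr !gB !rmorphB; ring.
  move=> v e e0 h.
  have [Ie Re0] : complex.Im e = 0 /\ 0 < Rc e.
    by move: e0; rewrite ltcE => /andP[/eqP -> ->].
  have pv : (p v < (Rc e)%:E)%E := pe_lt (p0 v) h.
  have piv : p ('i *: v) = p v by rewrite /p pZ normC_i mul1e.
  have h1 : `|g v| < Rc e by rewrite -lte_fin; exact: le_lt_trans (gb v) pv.
  have h2 : `|g ('i *: v)| < Rc e.
    by rewrite -lte_fin; apply: le_lt_trans (gb _) _; rewrite piv.
  rewrite /f; apply: (le_lt_trans (ler_normB _ _)).
  rewrite normrM normC_i mul1r !normC_real -rmorphD.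
  move: (`|g v|) (`|g ('i *: v)|) h1 h2 Ie Re0; case: e {e0 h pv} => e1 e2 /=.
  move=> A B hA hB -> he1; rewrite ltcE /=.
  by apply/andP; split; [apply/eqP; ring | lra].
- rewrite /f gx => /(congr1 (@complex.Re R)) /=; apply/eqP; move: c0n0.
  by rewrite mul0r mulr0 subrr subr0.
Qed.
End Cx.

Theorem corollary3p10 :
  (forall R : realType, cor3p10_over R) /\
  (forall R : realType, cor3p10_over R[i]).
Proof.
split; [exact: real_case | exact: cplx_case].
Qed.
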